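(* Let $d=(d_1,\dots,d_n)$ be a degree sequence with complementary sequence $\overline d$, and let $k\in\{1,\dots,m(d)\}$. Suppose that no nonzero entry in row $k+1$ of $M(d)$ lies in the same column as a nonzero entry in row $k$ (this condition is vacuous if $k=n$), and suppose that the first $k$ rows of $M(d)$ contain at least one nonzero entry. If the leftmost nonzero entry among the first $k$ rows of $M(d)$ lies in column $j$, then $\Delta_{n+1-j}(\overline d)=\Delta_k(d)$ (and $1\le n+1-j\le m(\overline d)$).
   Context: Degree sequences $d=(d_1,\dots,d_n)$ (of finite simple graphs, terms may be $0$) are listed in nonincreasing order; $\overline d=(n-1-d_n,\dots,n-1-d_1)$ is the complementary sequence. $m(d)=\max\{i : d_i\ge i-1\}$. For integers $k\ge 0$, $\Delta_k(d)=k(k-1)+\sum_{i>k}\min\{k,d_i\}-\sum_{i\le k}d_i$. The corrected Ferrers diagram $F(d)$ is the $n\times n$ matrix whose diagonal entries are $0$ and in which, for each $i$, the first $d_i$ off-diagonal entries of row $i$ (reading left to right, skipping the diagonal position) are $1$ and all other entries are $0$. The difference matrix is $M(d)=F(d)^T-F(d)$. *)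

(* Defs.v *)
(* Sequences are 1-indexed as in the paper:
   for d : seq nat of length n, d_i := dseq d i = nth 0 d (i-1), 1 <= i <= n. *)
From mathcomp Require Import all_boot all_order all_algebra.
Set Implicit Arguments. Unset Strict Implicit. Unset Printing Implicit Defensive.
Import GRing.Theory Num.Theory.

Definition dseq (d : seq nat) (i : nat) : nat := nth 0 d i.-1.

(* d is the degree sequence of a finite simple graph on vertex set {1..n}
   (vertex i+1 represented by i : 'I_n), listed in nonincreasing order. *)
Definition graphic (d : seq nat) : Prop :=
  exists e : rel 'I_(size d),
    [/\ symmetric e, irreflexive e &
        forall i : 'I_(size d), #|[set j | e i j]| = nth 0 d i].

Definition degree_sequence (d : seq nat) : Prop :=
  sorted geq d /\ graphic d.

Definition compl_seq (d : seq nat) : seq nat :=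
  [seq (size d).-1 - x | x <- rev d].

Definition mval (d : seq nat) : nat :=
  \max_(1 <= i < (size d).+1 | i.-1 <= dseq d i) i.

Definition Delta (d : seq nat) (k : nat) : int :=
  ((k * k.-1)%:Z + (\sum_(k.+1 <= i < (size d).+1) minn k (dseq d i))%:Z
   - (\sum_(1 <= i < k.+1) dseq d i)%:Z)%R.

(* Diagonal entries are 0; off-diagonal entry (i,j) is the p-th off-diagonal
   position of row i, where p = j if j < i and p = j - 1 if j > i;
   it is 1 iff p <= d_i. *)
Definition Ferrers (d : seq nat) (i j : nat) : int :=
  if i == j then 0%R
  else if (if j < i then j else j.-1) <= dseq d i then 1%R else 0%R.

Definition Mdiff (d : seq nat) (i j : nat) : int :=
  (Ferrers d j i - Ferrers d i j)%R.

(* Main.v *)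
Require Import Defs.
From mathcomp Require Import all_boot all_order all_algebra.
From mathcomp Require Import zify.
Set Implicit Arguments. Unset Strict Implicit. Unset Printing Implicit Defensive.

Lemma dseq_mono (d : seq nat) i i' : sorted geq d -> i <= i' -> dseq d i' <= dseq d i.
Proof.
move=> sd le; rewrite /dseq.
have le' : i.-1 <= i'.-1 by lia.
case: (ltnP i'.-1 (size d)) => h; last by rewrite nth_default.
have := @sorted_leq_nth _ geq (fun a b c h1 h2 => leq_trans h2 h1) (@leqnn) 0 d sd i.-1 i'.-1.
rewrite !inE; apply => //; lia.
Qed.

Lemma dseq_bound (d : seq nat) i : graphic d -> dseq d i <= (size d).-1.
Proof.
case=> e [_ irr cd]; rewrite /dseq.
case: (ltnP i.-1 (size d)) => h; last by rewrite nth_default.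
rewrite -(cd (Ordinal h)).
have -> : (size d).-1 = #|[set~ Ordinal h]| by rewrite cardsC1 card_ord.
apply: subset_leq_card; apply/subsetP => x; rewrite !inE => ex.
by apply/eqP => xe; move: ex; rewrite xe irr.
Qed.

Lemma cnt_le a b x : \sum_(a <= i < b) ((i <= x) : nat) = minn b x.+1 - a.
Proof.
elim: b => [|b IH]; first by rewrite big_geq.
case: (leqP a b) => ab; last by rewrite big_geq //; lia.
rewrite big_nat_recr //= IH; case: (leqP b x) => /= bx; lia.
Qed.

Lemma Mform d i c : i < c ->
  Mdiff d i c = (((i <= dseq d c) : nat)%:Z - ((c.-1 <= dseq d i) : nat)%:Z)%R.
Proof.
move=> ic; rewrite /Mdiff /Ferrers.
rewrite (gtn_eqF ic) (ltn_eqF ic) ic ltnNge (ltnW ic) /=.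
by case: (i <= dseq d c); case: (c.-1 <= dseq d i).
Qed.

Lemma Msym d i c : Mdiff d i c = (- Mdiff d c i)%R.
Proof. by rewrite /Mdiff GRing.opprB. Qed.

Lemma mval_prop (d : seq nat) k : sorted geq d -> 1 <= k <= mval d ->
  k <= size d /\ (forall i, 1 <= i <= k -> i.-1 <= dseq d i).
Proof.
move=> sd /andP[k1 km].
case: (boolP (has (fun i => (i.-1 <= dseq d i) && (k <= i)) (index_iota 1 (size d).+1))).
  move=> /hasP [i1]; rewrite mem_index_iota => /andP[i11 i1n] /andP[Pi1 ki1].
  split; first lia.
  move=> i /andP[ip ik]; have := dseq_mono sd (leq_trans ik ki1); lia.
move=> /hasPn H; exfalso.
have : mval d <= k.-1.
  apply/bigmax_leqP_seq => i ri Pi; have := H i ri; rewrite Pi /=; lia.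
lia.
Qed.

Lemma compl_size d : size (compl_seq d) = size d.
Proof. by rewrite /compl_seq size_map size_rev. Qed.

Lemma compl_dseq d i : 1 <= i <= size d ->
  dseq (compl_seq d) i = (size d).-1 - dseq d ((size d).+1 - i).
Proof.
move=> /andP[i1 in_]; rewrite /dseq /compl_seq (nth_map 0); last by rewrite size_rev; lia.
rewrite nth_rev; last lia.
by have -> : (size d - (i.-1).+1) = ((size d).+1 - i).-1 by lia.
Qed.

Lemma Meq0 d i c : i < c ->
  (Mdiff d i c == 0%R) = ((i <= dseq d c) == (c.-1 <= dseq d i)).
Proof.
by move=> ic; rewrite Mform //; case: (i <= dseq d c); case: (c.-1 <= dseq d i).
Qed.

Lemma key_facts (d : seq nat) k j :
  sorted geq d -> k <= size d -> 1 <= k ->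
  (forall i, 1 <= i <= k -> i.-1 <= dseq d i) ->
  (k < size d ->
     forall c, 1 <= c <= size d ->
       Mdiff d k.+1 c != 0%R -> Mdiff d k c = 0%R) ->
  1 <= j <= size d ->
  (exists2 i, 1 <= i <= k & Mdiff d i j != 0%R) ->
  [/\ k < j, dseq d j <= j.-1 &
      forall i c, k < i < j -> j <= c ->
        (i <= dseq d c) = (c.-1 <= dseq d i)].
Proof.
move=> sd kn k1 Hm Hdis /andP[j1 jn] [i0 /andP[i01 i0k] Mi0].
have kj : k < j.
  rewrite ltnNge; apply/negP => jk.
  have Z : forall a b, 1 <= a -> a < b -> b <= k -> Mdiff d a b = 0%R.
    move=> a b a1 ab bk; apply/eqP; rewrite Meq0 //.
    have h1 : b.-1 <= dseq d b by apply: Hm; lia.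
    have h2 := dseq_mono sd (ltnW ab).
    have -> : a <= dseq d b by lia.
    by have -> : b.-1 <= dseq d a by lia.
  move: Mi0; case: (ltngtP i0 j) => c0.
  - have -> : Mdiff d i0 j = 0%R by apply: Z; lia.
    by rewrite eqxx.
  - rewrite Msym; have -> : Mdiff d j i0 = 0%R by apply: Z; lia.
    by rewrite GRing.oppr0 eqxx.
  - by rewrite c0 /Mdiff GRing.subrr eqxx.
have i0j : i0 < j by lia.
have kn' : k < size d by lia.
have Mk := Hdis kn' j (ltac:(lia)).
move: Mi0; rewrite Meq0 //.
have Hik0 := dseq_mono sd i0k.
have Hk1 := dseq_mono sd (leqnSn k).
case: (leqP i0 (dseq d j)) => /= h1.
- (* M_{i0 j} = +1 *)
  have dj : dseq d j <= dseq d i0 by apply: dseq_mono; lia.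
  split => //; first lia.
  move=> i c /andP[ki ij] jc.
  have djk : dseq d j <= k.
    rewrite leqNgt; apply/negP => hdj.
    have A : Mdiff d k.+1 j != 0%R.
      rewrite Meq0; last lia.
      have -> : k.+1 <= dseq d j by lia.
      by have -> : j.-1 <= dseq d k.+1 = false by lia.
    have := Mk A; move/eqP; rewrite Meq0; last lia.
    have -> : k <= dseq d j by lia.
    by have -> : j.-1 <= dseq d k = false by lia.
  have e1 := dseq_mono sd jc.
  have e2 : dseq d i <= dseq d i0 by apply: dseq_mono; lia.
  have -> : i <= dseq d c = false by lia.
  by have -> : c.-1 <= dseq d i = false by lia.
- (* M_{i0 j} = -1 *)
  case: (leqP j.-1 (dseq d i0)) => h2 //= _.
  split => //; first lia.
  move=> i c /andP[ki ij] jc.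
  have dk1 : dseq d k.+1 <= j.-2.
    rewrite leqNgt; apply/negP => hdk.
    have A : Mdiff d k.+1 j != 0%R.
      rewrite Meq0; last lia.
      have -> : k.+1 <= dseq d j = false by lia.
      by have -> : j.-1 <= dseq d k.+1 by lia.
    have := Mk A; move/eqP; rewrite Meq0; last lia.
    have -> : k <= dseq d j = false by lia.
    by have -> : j.-1 <= dseq d k by lia.
  have e1 := dseq_mono sd jc.
  have e2 : dseq d i <= dseq d k.+1 by apply: dseq_mono; lia.
  have -> : i <= dseq d c = false by lia.
  by have -> : c.-1 <= dseq d i = false by lia.
Qed.

Lemma sum_refl N a b (F : nat -> nat) : a <= b <= N.+1 ->
  \sum_(a <= i < b) F i = \sum_(N.+1 - b <= i < N.+1 - a) F (N - i).
Proof.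
move=> /andP[ab bN]; elim: b ab bN => [|b IH] ab bN.
  by rewrite !big_geq //; lia.
case: (leqP a b) => ab'; last first.
  have -> : a = b.+1 by lia.
  by rewrite !big_geq.
rewrite big_nat_recr // IH //; last lia.
rewrite subSS (@big_ltn _ _ _ (N - b)); last lia.
have -> : N - (N - b) = b by lia.
have -> : (N - b).+1 = N.+1 - b by lia.
by rewrite addnC.
Qed.

Lemma predle c x : (c.-1 <= x) = (c <= x.+1).
Proof. by case: c. Qed.

Lemma sum_sub_const a b (K : nat) (e : nat -> nat) :
  (forall i, a <= i < b -> e i <= K) ->
  \sum_(a <= i < b) (K - e i) + \sum_(a <= i < b) e i = (b - a) * K.
Proof.
move=> H; rewrite -big_split /= -sum_nat_const_nat.
by apply: eq_big_nat => i /H; lia.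
Qed.

Lemma key_sum (d : seq nat) k j :
  sorted geq d -> (forall i, dseq d i <= (size d).-1) ->
  1 <= k -> k < j -> j <= size d ->
  (forall i, 1 <= i <= k -> i.-1 <= dseq d i) ->
  dseq d j <= j.-1 ->
  (forall i c, 1 <= i <= k -> k < c < j -> (i <= dseq d c) = (c.-1 <= dseq d i)) ->
  (forall i c, k < i < j -> j <= c -> (i <= dseq d c) = (c.-1 <= dseq d i)) ->
  \sum_(k.+1 <= c < (size d).+1) minn k (dseq d c)
   + \sum_(1 <= i < j) ((dseq d i).+2 - j)
  = \sum_(j <= c < (size d).+1) dseq d c
   + \sum_(1 <= i < k.+1) ((dseq d i).+1 - k).
Proof.
set n := size d.
move=> sd Hb k1 kj jn Hm dj HY HZ.
pose a i c := ((i <= dseq d c) : nat).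
pose b i c := ((c.-1 <= dseq d i) : nat).
have A1 : \sum_(k.+1 <= c < n.+1) minn k (dseq d c)
    = \sum_(1 <= i < k.+1) \sum_(k.+1 <= c < n.+1) a i c.
  rewrite exchange_big_nat; apply: eq_big_nat => c _.
  rewrite /a cnt_le; lia.
have B1 : \sum_(1 <= i < k.+1) ((dseq d i).+1 - k)
    = \sum_(1 <= i < k.+1) \sum_(k.+1 <= c < n.+1) b i c.
  apply: eq_big_nat => i /andP[i1 ik].
  under eq_big_nat => c _ do rewrite /b predle.
  rewrite cnt_le; have := Hb i; have := Hm i (ltac:(lia)); lia.
have A2 : \sum_(j <= c < n.+1) dseq d c
    = \sum_(1 <= i < j) \sum_(j <= c < n.+1) a i c.
  rewrite exchange_big_nat; apply: eq_big_nat => c /andP[jc _].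
  rewrite /a cnt_le; have := dseq_mono sd jc; lia.
have B2 : \sum_(1 <= i < j) ((dseq d i).+2 - j)
    = \sum_(1 <= i < j) \sum_(j <= c < n.+1) b i c.
  apply: eq_big_nat => i /andP[i1 ij].
  under eq_big_nat => c _ do rewrite /b predle.
  rewrite cnt_le; have := Hb i; lia.
rewrite A1 B1 A2 B2.
have S1 : forall F : nat -> nat -> nat,
    \sum_(1 <= i < k.+1) \sum_(k.+1 <= c < n.+1) F i c
    = \sum_(1 <= i < k.+1) \sum_(k.+1 <= c < j) F i c
      + \sum_(1 <= i < k.+1) \sum_(j <= c < n.+1) F i c.
  move=> F; rewrite -big_split /=; apply: eq_big_nat => i _.
  rewrite -big_cat_nat //; lia.
have S2 : forall F : nat -> nat -> nat,
    \sum_(1 <= i < j) \sum_(j <= c < n.+1) F i c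
    = \sum_(1 <= i < k.+1) \sum_(j <= c < n.+1) F i c
      + \sum_(k.+1 <= i < j) \sum_(j <= c < n.+1) F i c.
  by move=> F; rewrite -big_cat_nat //; lia.
rewrite !S1 !S2.
have EY : \sum_(1 <= i < k.+1) \sum_(k.+1 <= c < j) a i c
        = \sum_(1 <= i < k.+1) \sum_(k.+1 <= c < j) b i c.
  apply: eq_big_nat => i /andP[i1 ik]; apply: eq_big_nat => c /andP[kc cj].
  by rewrite /a /b HY //; lia.
have EZ : \sum_(k.+1 <= i < j) \sum_(j <= c < n.+1) a i c
        = \sum_(k.+1 <= i < j) \sum_(j <= c < n.+1) b i c.
  apply: eq_big_nat => i /andP[ki ij]; apply: eq_big_nat => c /andP[jc cn].
  by rewrite /a /b HZ //; lia.
rewrite EY EZ; lia.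
Qed.
Unset Implicit Arguments.
Theorem lemma9 (d : seq nat) (k j : nat) :
  degree_sequence d ->
  1 <= k <= mval d ->
  (k < size d ->
     forall c, 1 <= c <= size d ->
       Mdiff d k.+1 c != 0%R -> Mdiff d k c = 0%R) ->
  1 <= j <= size d ->
  (exists2 i, 1 <= i <= k & Mdiff d i j != 0%R) ->
  (forall i c, 1 <= i <= k -> 1 <= c < j -> Mdiff d i c = 0%R) ->
  Delta (compl_seq d) ((size d).+1 - j) = Delta d k /\
  1 <= (size d).+1 - j <= mval (compl_seq d).
Proof.
move=> [sd gd] km Hdis Hj Hex Hleft.
have Hb := fun i => @dseq_bound d i gd.
have [kn Hm] := mval_prop sd km.
have k1 : 1 <= k by case/andP: km.
have [kj dj HZ] := key_facts sd kn k1 Hm Hdis Hj Hex.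
case/andP: Hj => j1 jn.
set n := size d in Hb kn Hm kj jn dj HZ Hdis Hleft Hex *.
have HY : forall i c, 1 <= i <= k -> k < c < j -> (i <= dseq d c) = (c.-1 <= dseq d i).
  move=> i c ik kc; have /eqP := Hleft i c ik (ltac:(lia)).
  by rewrite Meq0; [move/eqP | lia].
have Key := key_sum sd Hb k1 kj jn Hm dj HY HZ.
set k' := n.+1 - j.
split; last first.
  apply/andP; split; first lia.
  rewrite /mval compl_size.
  have := @leq_bigmax_seq _ (index_iota 1 n.+1) (fun i => i.-1 <= dseq (compl_seq d) i) id k'.
  apply; first by rewrite mem_index_iota; lia.
  rewrite compl_dseq; last lia.
  have -> : n.+1 - k' = j by lia.
  lia.
have S1 : \sum_(1 <= i < k.+1) dseq d i
          = \sum_(1 <= i < k.+1) ((dseq d i).+1 - k) + k * k.-1.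
  have -> : k * k.-1 = (k.+1 - 1) * k.-1 by lia.
  rewrite -sum_nat_const_nat -big_split /=.
  apply: eq_big_nat => i /andP[i1 ik]; have := Hm k (ltac:(lia)).
  have := dseq_mono sd (ltac:(lia) : i <= k); lia.
have P1 : \sum_(k'.+1 <= i < (size (compl_seq d)).+1) minn k' (dseq (compl_seq d) i)
        = \sum_(1 <= c < j) (k' - ((dseq d c).+2 - j)).
  rewrite compl_size (@sum_refl n.+1); last lia.
  have -> : n.+2 - n.+1 = 1 by lia.
  have -> : n.+2 - k'.+1 = j by lia.
  apply: eq_big_nat => c /andP[c1 cj].
  rewrite compl_dseq; last lia.
  have -> : n.+1 - (n.+1 - c) = c by lia.
  have := Hb c; lia.
have P2 : \sum_(1 <= i < k'.+1) dseq (compl_seq d) i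
        = \sum_(j <= c < n.+1) (n.-1 - dseq d c).
  rewrite (@sum_refl n.+1); last lia.
  have -> : n.+2 - k'.+1 = j by lia.
  have -> : n.+2 - 1 = n.+1 by lia.
  apply: eq_big_nat => c /andP[jc cn].
  rewrite compl_dseq; last lia.
  by have -> : n.+1 - (n.+1 - c) = c by lia.
have Q1 := @sum_sub_const 1 j k' (fun c => (dseq d c).+2 - j)
  (fun c hc => ltac:(have := Hb c; lia)).
have Q2 := @sum_sub_const j n.+1 n.-1 (fun c => dseq d c)
  (fun c hc => Hb c).
rewrite /Delta P1 P2 S1.
move: Key Q1 Q2.
set A1 := \sum_(k.+1 <= c < n.+1) _.
set B2 := \sum_(1 <= i < j) _.
set A2 := \sum_(j <= c < n.+1) _.
set B1 := \sum_(1 <= i < k.+1) _.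
set X1 := \sum_(1 <= c < j) _.
set X2 := \sum_(j <= c < n.+1) _.
move=> Key Q1 Q2.
have E : (j - 1) * k' + k' * k'.-1 = (n.+1 - j) * n.-1.
  rewrite (mulnC (j - 1)) -mulnDr /k'; congr (_ * _); lia.
lia.
Qed.
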